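(* Suppose Assumption B holds. Then $\gamma\left(\tfrac1n\mathbf 1\right)\ge\tfrac1n\gamma^*$, where $\mathbf 1$ is the all-ones vector in $\mathbb R^n$ and $\gamma^*=\sup_{\alpha\in\mathrm{relint}(\Omega)}\gamma(\alpha)$.
   Context: $V_S=\{1,\dots,n\}$ (supply locations), $V_D$ a finite set (demand locations), and a bipartite graph $G=(V_S\cup V_D,E)$. Write $\partial(j')=\{i\in V_S:(i,j')\in E\}$ and $\partial(J)=\bigcup_{j'\in J}\partial(j')$. The matrix $\phi=(\phi_{j'k})_{j'\in V_D,k\in V_S}$ is nonnegative with entries summing to $1$. $\Omega$ is the probability simplex in $\mathbb R^n$, and $\mathrm{relint}(\Omega)$ consists of its points with all coordinates positive. Assumption B: for every nonempty $J\subsetneq V_D$, $\sum_{i\in\partial(J)}\sum_{j'\in V_D}\phi_{j'i}>\sum_{j'\in J}\sum_{k\in V_S}\phi_{j'k}$. Define $\mathcal J=\{J\subsetneq V_D:\sum_{j'\in J}\sum_{k\notin\partial(J)}\phi_{j'k}>0\}$, $\lambda_J=\sum_{j'\notin J}\sum_{k\in\partial(J)}\phi_{j'k}$, $\mu_J=\sum_{j'\in J}\sum_{k\notin\partial(J)}\phi_{j'k}$, and for $\alpha\in\mathrm{relint}(\Omega)$, $$\gamma(\alpha)=\min_{J\in\mathcal J}\Big(\sum_{i\in\partial(J)}\alpha_i\Big)\log\frac{\lambda_J}{\mu_J}.$$ (This is the demand-drop exponent of the scaled MaxWeight policy with scaling vector $\alpha$; $\alpha=\frac1n\mathbf 1$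 corresponds to vanilla MaxWeight.) *)

(* Defs.v *)
From HB Require Import structures.
From mathcomp Require Import all_boot all_order all_algebra.
From mathcomp Require Import all_classical all_reals all_analysis.
Set Implicit Arguments. Unset Strict Implicit. Unset Printing Implicit Defensive.
Import Order.TTheory GRing.Theory Num.Theory.
Local Open Scope ring_scope.

Section Defs.
Variables (R : realType) (n : nat) (VD : finType).
(* adj i j' <-> (i, j') \in E  (bipartite edge set between supply 'I_n and demand VD) *)
Variable adj : 'I_n -> VD -> bool.
Variable phi : VD -> 'I_n -> R.

Definition nbhd (J : {set VD}) : {set 'I_n} :=
  [set i | [exists j in J, adj i j]].

Definition is_phi_distribution : Prop :=
  (forall j k, 0 <= phi j k) /\ \sum_(j : VD) \sum_(k : 'I_n) phi j k = 1.

Definition assumptionB : Prop :=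
  forall J : {set VD}, J != finset.set0 -> J \proper [set: VD] ->
    \sum_(i in nbhd J) \sum_(j : VD) phi j i > \sum_(j in J) \sum_(k : 'I_n) phi j k.

Definition lambdaJ (J : {set VD}) : R :=
  \sum_(j in ~: J) \sum_(k in nbhd J) phi j k.

Definition muJ (J : {set VD}) : R :=
  \sum_(j in J) \sum_(k in ~: nbhd J) phi j k.

Definition calJ (J : {set VD}) : bool := (J \proper [set: VD]) && (0 < muJ J).

(* gamma(alpha) as an extended real; the minimum over an empty family is +oo *)
Definition gamma (alpha : 'I_n -> R) : \bar R :=
  \big[Order.min/+oo%E]_(J : {set VD} | calJ J)
     ((\sum_(i in nbhd J) alpha i) * ln (lambdaJ J / muJ J))%:E.

Definition relint_simplex : set ('I_n -> R) :=
  [set alpha | (forall i, 0 < alpha i) /\ \sum_(i : 'I_n) alpha i = 1].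

Definition gamma_star : \bar R :=
  ereal_sup [set gamma alpha | alpha in relint_simplex].
End Defs.

(* Main.v *)
Require Import Defs.
From HB Require Import structures.
From mathcomp Require Import all_boot all_order all_algebra.
From mathcomp Require Import all_classical all_reals all_analysis.
Import Order.TTheory GRing.Theory Num.Theory.
Local Open Scope ring_scope.

Lemma keyJ (R : realType) (n : nat) (VD : finType)
    (adj : 'I_n -> VD -> bool) (phi : VD -> 'I_n -> R) (J : {set VD}) :
  assumptionB adj phi -> calJ adj phi J ->
  0 < muJ adj phi J /\ muJ adj phi J < lambdaJ adj phi J.
Proof.
move=> hB /andP[hp hmu]; split => //.
have hJ0 : J != finset.set0.
  apply/negP => /eqP J0; move: hmu; rewrite /muJ J0 big_set0 ltxx //.
have := hB J hJ0 hp.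
rewrite /gt.
rewrite [X in _ < X -> _]exchange_big /=.
rewrite [X in _ < X -> _](bigID (fun j => j \in J)) /=.
rewrite [X in X < _ -> _](eq_bigr (fun j => \sum_(k in nbhd adj J) phi j k + \sum_(k in ~: nbhd adj J) phi j k)); last first.
  move=> j _; rewrite (bigID (fun k => k \in nbhd adj J)) /=.
  congr (_ + _). apply: eq_bigl => k; by rewrite finset.in_setC.
rewrite big_split /= ltrD2l /lambdaJ /muJ.
move=> h; apply: (lt_le_trans h); rewrite le_eqVlt; apply/orP; left; apply/eqP.
by apply: eq_bigl => j; rewrite finset.in_setC.
Qed.

Theorem proposition4 (R : realType) (n : nat) (VD : finType)
    (adj : 'I_n -> VD -> bool) (phi : VD -> 'I_n -> R) :
  is_phi_distribution phi ->
  assumptionB adj phi ->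
  ((((n%:R)^-1 : R)%R)%:E * gamma_star adj phi
    <= gamma adj phi (fun _ : 'I_n => ((n%:R)^-1 : R)%R))%E.
Proof.
move=> [hphi0 hphi1] hB.
have n0 : (0 < n)%N.
  case: n phi hphi0 hphi1 {adj hB} => // phi _.
  rewrite (eq_bigr (fun _ => 0)); first by rewrite big1 // => /eqP; rewrite eq_sym oner_eq0.
  by move=> j _; rewrite big_ord0.
have c0 : 0 < (n%:R)^-1 :> R by rewrite invr_gt0 ltr0n.
rewrite /gamma; apply/bigmin_geP; split; first exact: leey.
move=> J hJ.
have [hmu hlm] := @keyJ R n VD adj phi J hB hJ.
set L := ln _.
have L0 : 0 < L.
  by rewrite /L ln_gt0 // ltr_pdivlMr // mul1r.
have gsL : (gamma_star adj phi <= L%:E)%E.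
  apply: ge_ereal_sup => _ [alpha [hpos hsum] <-].
  have /bigmin_geP[_ h1] := lexx (gamma adj phi alpha).
  have {}h1 := h1 J hJ.
  have hs : \sum_(i in nbhd adj J) alpha i <= 1.
    rewrite -hsum [leRHS](bigID (fun i => i \in nbhd adj J)) /= lerDl.
    by apply: sumr_ge0 => i _; exact: ltW.
  apply: (le_trans h1); rewrite lee_fin -[leRHS]mul1r.
  by apply: ler_wpM2r => //; exact: ltW.
have nb0 : (0 < #|nbhd adj J|)%N.
  rewrite card_gt0; apply/negP => /eqP e.
  move: (lt_trans hmu hlm); by rewrite /lambdaJ e (eq_bigr (fun _ => 0)) ?big1 ?ltxx // => j _; rewrite big_set0.
apply: (le_trans (lee_wpmul2l _ gsL)); first by rewrite lee_fin ltW.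
rewrite -EFinM lee_fin sumr_const mulrnAl -[leLHS]mulr1n; apply: ler_wpMn2l => //; exact: mulr_ge0 (ltW c0) (ltW L0).
Qed.
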